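(* Let $q$ be an odd prime power, $P\in\mathbb{F}_q[T]$ monic irreducible with $\chi_q(P)=-1$, and $h=(h_1,\dots,h_k)$ a $k$-tuple of pairwise distinct polynomials. Then $\delta_{q,h}(P)=1-\frac{\eta}{|P|+1}$ for some real $\eta$ with $1\le\eta\le k$; moreover $\eta=1$ when $h$ is the $1$-tuple $(0)$, and $\eta=k$ when $P\nmid\Delta_h$.
   Context: $|P|=q^{\deg P}$; $\chi_q(f)=0$ if $f(0)=0$, $1$ if $f(0)$ is a nonzero square in $\mathbb{F}_q$, $-1$ otherwise. $\mathcal{A}_q(P^\nu)=\{A^2+TB^2\bmod P^\nu:A,B\in\mathbb{F}_q[T]\}$, $\mathcal{A}_{q,h}(P^\nu)=\{f\bmod P^\nu:f+h_i\in\mathcal{A}_q(P^\nu)\ \forall i\}$, $\delta_{q,h}(P)=\lim_{\nu\to\infty}|P|^{-\nu}\#\mathcal{A}_{q,h}(P^\nu)$. $\Delta_h=\prod_{i\ne j}(h_i-h_j)$ (empty product $=1$). *)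

(* Defs.v *)
From HB Require Import structures.
From mathcomp Require Import all_boot all_order all_algebra all_field.
From Stdlib Require Import ClassicalEpsilon.
Set Implicit Arguments. Unset Strict Implicit. Unset Printing Implicit Defensive.
Import GRing.Theory.
Local Open Scope ring_scope.

Definition asbool (P : Prop) : bool :=
  if excluded_middle_informative P then true else false.

Definition chiq (F : finFieldType) (f : {poly F}) : int :=
  if f.[0] == 0 then 0
  else if [exists y : F, y ^+ 2 == f.[0]] then 1 else -1.

Definition inAq (F : finFieldType) (M f : {poly F}) : Prop :=
  exists A B : {poly F}, M %| (f - (A ^+ 2 + 'X * B ^+ 2)).

Definition inAqh (F : finFieldType) (h : seq {poly F}) (M f : {poly F}) : Prop :=
  forall hi, hi \in h -> inAq M (f + hi).

(* # A_{q,h}(P^nu): residues mod P^nu are represented by the polynomials of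
   degree < nu * deg P, i.e. coefficient tuples of length nu * deg P *)
Definition countAqh (F : finFieldType) (h : seq {poly F}) (P : {poly F}) (nu : nat) : nat :=
  #|[set t : (((size P).-1 * nu)%N).-tuple F | asbool (inAqh h (P ^+ nu) (Poly t))]|.

Definition normP (F : finFieldType) (P : {poly F}) : nat := (#|F| ^ (size P).-1)%N.

Definition Deltah (F : finFieldType) (h : seq {poly F}) : {poly F} :=
  \prod_(i < size h) \prod_(j < size h | i != j) (h`_i - h`_j).

(* Main.v *)
Require Import Defs.
From HB Require Import structures.
From mathcomp Require Import all_boot all_order all_algebra all_field zify ring.
From Stdlib Require Import ClassicalEpsilon.
Set Implicit Arguments. Unset Strict Implicit. Unset Printing Implicit Defensive.
Import GRing.Theory.
Local Open Scope ring_scope.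

Lemma arith1 (m c : nat) : ((2 * m).+1 < 2 * c.+1)%N -> (c < m)%N -> False.
Proof. lia. Qed.

Section Sq.
Variable K : finFieldType.
Hypothesis oddK : odd #|K|.

Definition sqs := [set y ^+ 2 | y in K].

Lemma sqs_card : (#|K| <= 2 * #|sqs|)%N.
Proof.
have -> : #|K| = (\sum_(y : K) 1)%N by rewrite sum1_card.
rewrite (partition_big (fun y : K => y ^+ 2) (mem sqs)) /=; last first.
  by move=> y _; apply: imset_f.
rewrite mulnC -sum_nat_const /= leq_sum // => z /imsetP [y0 _ ->].
rewrite sum1_card.
have sub : [pred y | true && (y ^+ 2 == y0 ^+ 2)] \subset [set y0; - y0].
  by apply/subsetP => y; rewrite inE /= eqf_sqr !inE.
by rewrite (leq_trans (subset_leq_card sub)) // cards2; case: (_ != _).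
Qed.

Lemma sqs_card2 : (#|K|.+1 <= 2 * #|sqs|)%N.
Proof.
have := sqs_card; rewrite leq_eqVlt => /orP [/eqP E|//].
by move: oddK; rewrite E oddM.
Qed.

Lemma sum_sq (t u : K) : t != 0 -> exists a b : K, a ^+ 2 + t * b ^+ 2 = u.
Proof.
move=> t0.
pose S' := [set u - t * x | x in sqs].
have cS' : #|S'| = #|sqs|.
  by apply: card_imset => x y /= /addrI /oppr_inj /(mulfI t0).
have : ~~ [disjoint sqs & S'].
  apply/negP => dis.
  have := cardsU sqs S'; rewrite (disjoint_setI0 dis) cards0 subn0 cS' => E.
  have := max_card (sqs :|: S'); rewrite E addnn -mul2n => H.
  by have := leq_trans sqs_card2 H; rewrite ltnn.
case/pred0Pn => z /andP [/imsetP [a _ ->] /imsetP [x /imsetP [b _ ->] E]].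
exists a, b; by rewrite E subrK.
Qed.

Lemma euler_sq (x : K) : x != 0 -> x ^+ (#|K|.-1./2) = 1 -> exists y, y ^+ 2 = x.
Proof.
move=> x0 xm; case: (boolP [exists y, y ^+ 2 == x]) => [/existsP [y /eqP]|nsq]; first by eauto.
exfalso.
set m := #|K|.-1./2.
have q3 : (2 < #|K|)%N.
  have := finNzRing_gt1 K; rewrite leq_eqVlt => /orP [/eqP E|//].
  by move: oddK; rewrite -E.
have m0 : (0 < m)%N.
  rewrite /m; case: #|K| q3 => [|[|[|n]]] //.
have xS : x \notin sqs.
  apply/imsetP => [[y _ E]]; move/existsP: nsq; apply; by exists y; rewrite E.
pose rs := enum (x |: (sqs :\ 0)).
have := @max_poly_roots _ ('X^m - 1) rs.
have nz : 'X^m - 1 != 0 :> {poly K}.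
  by rewrite -size_poly_eq0 -polyC1 size_XnsubC.
have allr : all (root ('X^m - 1)) rs.
  apply/allP => z; rewrite mem_enum !inE => /orP [/eqP ->|/andP [z0 /imsetP [y _ Ey]]].
    by rewrite rootE !hornerE xm subrr.
  rewrite rootE !hornerE Ey -exprM.
  have y0 : y != 0 by apply: contraNneq z0 => y0; rewrite Ey y0 expr0n.
  have : y ^+ #|K| = y by rewrite expf_card.
  have -> : (2 * m = #|K|.-1)%N.
    rewrite /m mul2n halfK; move: oddK; case: #|K| => //= n; move/negbTE => ->.
    by rewrite subn0.
  move: y0; case: #|K| => [|n] y0 //=; first by rewrite expr0 subrr.
  rewrite exprS => /eqP; rewrite subr_eq0 => H; apply/eqP; apply: (mulfI y0); rewrite mulr1; exact/eqP.
move=> /(_ nz allr (enum_uniq _)).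
rewrite -polyC1 size_XnsubC // /rs -cardE cardsU1 in_setD1 (negbTE xS) andbF /=.
have s0 : (0 : K) \in sqs by apply/imsetP; exists 0; rewrite ?expr0n.
have := sqs_card2; rewrite (cardsD1 0 sqs) s0 => H.
rewrite add1n ltnS.
have e : #|K| = (2 * m).+1.
  rewrite /m mul2n halfK; move: oddK; case: #|K| => //= n; move/negbTE => ->.
  by rewrite subn0.
move: H; rewrite e add1n => H Hc; exact: (arith1 H Hc).
Qed.

End Sq.

Section KF.
Variable F : finFieldType.
Variable P : {poly F}.
Hypothesis Pm : P \is monic.
Hypothesis Pi : irreducible_poly P.
Hypothesis oddF : odd #|F|.
Hypothesis P0 : P.[0] != 0.
Let mi : monic_irreducible_poly P := (Pi, Pm).
Let K : finFieldType := {poly %/ P with mi}.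
Let ip : {rmorphism {poly F} -> K} := in_qpoly P.
Let cF : {rmorphism F -> K} := (in_qpoly P \o polyC)%FUN.
Let q := #|F|.
Let d := (size P).-1.
Let alpha := ip 'X.

Lemma q_gt1 : (1 < q)%N.
Proof. exact: finNzRing_gt1. Qed.

Lemma ip_eq0 g : (ip g == 0) = (P %| g).
Proof.
apply/eqP/idP => [/val_eqP /= | hDp].
  by rewrite -Pdiv.IdomainMonic.modpE (mk_monicE mi).
by apply/val_eqP; rewrite /= -Pdiv.IdomainMonic.modpE (mk_monicE mi).
Qed.

Lemma ip_surj (x : K) : ip (val x) = x.
Proof. apply: val_inj => /=. apply: in_qpoly_small. exact: size_mk_monic. Qed.

Lemma cardK : #|K| = (q ^ d)%N.
Proof. exact: card_qfpoly. Qed.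

Lemma ev_ip g : (map_poly cF g).[alpha] = ip g.
Proof.
elim/poly_ind: g => [|g c IH]; first by rewrite !rmorph0 horner0.
rewrite rmorphD rmorphM /= map_polyX map_polyC !hornerE IH.
by rewrite -!(rmorphM ip) -(rmorphD ip).
Qed.

Lemma PnX : ~~ (P %| 'X).
Proof.
apply/negP => H.
have s1 : (1 < size P)%N by case: Pi.
have : (size P <= size ('X : {poly F}))%N by apply: dvdp_leq => //; rewrite polyX_eq0.
rewrite size_polyX => s2.
have : size P == size ('X : {poly F}) by rewrite size_polyX eqn_leq s2 s1.
rewrite (dvdp_size_eqp H) eqp_monic ?monicX // => /eqP E.
by move: P0; rewrite E hornerX eqxx.
Qed.

Lemma alpha0 : alpha != 0.
Proof. by rewrite /alpha ip_eq0 PnX. Qed.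

Lemma oddK : odd #|K|.
Proof. by rewrite cardK oddX oddF orbT. Qed.

Lemma sum_sq_mod (u : {poly F}) : exists A B : {poly F}, P %| u - (A ^+ 2 + 'X * B ^+ 2).
Proof.
have [a [b E]] := sum_sq oddK (ip u) alpha0.
exists (val a), (val b); rewrite -ip_eq0 rmorphB rmorphD (rmorphXn ip) (rmorphM ip) (rmorphXn ip) /= !ip_surj.
by rewrite -/alpha E subrr.
Qed.

Lemma charq : [char K].-nat q.
Proof.
have [p pp pF] := finPcharP F.
have pK : p \in [char K].
  rewrite inE pp /=; move: pF; rewrite inE pp /= => /eqP H.
  by rewrite -(rmorph_nat cF) H rmorph0.
have := @pgroup.card_pgroup _ p (fingroup.setT_group _) (abelian.abelem_pgroup (abelian.fin_ring_pchar_abelem pF)).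
rewrite cardsT => E.
have E2 : q = (p ^ logn p #|F|)%N by exact: E.
by rewrite E2 pnatX (pnatE _ pp) pK.
Qed.

Lemma charqi i : [char K].-nat (q ^ i)%N.
Proof. by rewrite pnatX charq. Qed.

Lemma frD i (x y : K) : (x + y) ^+ (q ^ i)%N = x ^+ (q ^ i)%N + y ^+ (q ^ i)%N.
Proof. exact: exprDn_pchar (charqi i). Qed.
Lemma frN i (x : K) : (- x) ^+ (q ^ i)%N = - x ^+ (q ^ i)%N.
Proof. exact: exprNn_pchar (charqi i). Qed.
Lemma frC i (c : F) : cF c ^+ (q ^ i)%N = cF c.
Proof.
elim: i => [|i IH]; first by rewrite expr1.
by rewrite expnSr exprM IH -rmorphXn /= expf_card.
Qed.

Lemma fr_ev i (g : {poly F}) (x : K) :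
  (map_poly cF g).[x] ^+ (q ^ i)%N = (map_poly cF g).[x ^+ (q ^ i)%N].
Proof.
elim/poly_ind: g => [|g c IH]; first by rewrite rmorph0 !horner0 expr0n expn_eq0 (gtn_eqF (ltnW q_gt1)).
rewrite rmorphD rmorphM /= map_polyX map_polyC !hornerE frD exprMn IH frC //.
Qed.

Lemma fr_inj i (x y : K) : x ^+ (q ^ i)%N = y ^+ (q ^ i)%N -> x = y.
Proof.
move=> E; have : (x - y) ^+ (q ^ i)%N == 0 by rewrite frD frN E subrr.
by rewrite expf_eq0 subr_eq0 => /andP [_ /eqP].
Qed.

Let PK := map_poly cF P.

Lemma PK_root i : root PK (alpha ^+ (q ^ i)%N).
Proof.
by rewrite /root /PK -fr_ev ev_ip expf_eq0 ip_eq0 dvdpp andbT expn_gt0 (ltnW q_gt1).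
Qed.


Lemma size_XnX n : (1 < n)%N -> size ('X^n - 'X : {poly K}) = n.+1.
Proof.
move=> n1; rewrite size_polyDl ?size_polyXn // size_polyN size_polyX //.
Qed.

Lemma alpha_distinct i j : (i < j < d)%N -> alpha ^+ (q ^ i)%N != alpha ^+ (q ^ j)%N.
Proof.
move=> /andP [ij jd]; apply/negP => /eqP E.
have e0 : (0 < j - i)%N by rewrite subn_gt0.
have E2 : alpha ^+ (q ^ (j - i))%N = alpha.
  apply: (@fr_inj i); rewrite -exprM -expnD subnK ?(ltnW ij) //; exact/esym.
have allx (x : K) : x ^+ (q ^ (j - i))%N = x.
  by rewrite -(ip_surj x) -ev_ip fr_ev E2.
have qe1 : (1 < q ^ (j - i))%N by rewrite -{1}(expn0 q) ltn_exp2l ?q_gt1.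
have := @max_poly_roots _ ('X^(q ^ (j - i))%N - 'X) (enum K).
rewrite -size_poly_eq0 size_XnX // enum_uniq -cardE cardK => /(_ isT).
have -> : all (root ('X^(q ^ (j - i))%N - 'X)) (enum K).
  by apply/allP => x _; rewrite rootE !hornerE allx subrr.
move=> /(_ isT isT); rewrite ltnS leqNgt ltn_exp2l ?q_gt1 //.
by rewrite (leq_ltn_trans (leq_subr i j) jd).
Qed.

Let rs := [seq alpha ^+ (q ^ i)%N | i <- iota 0 d].

Lemma PK_fact : PK = \prod_(z <- rs) ('X - z%:P).
Proof.
have sPK : size PK = d.+1.
  rewrite /PK size_map_poly /d prednK //; case: Pi => H _; exact: ltnW.
have lPK : lead_coef PK = 1 by rewrite /PK lead_coef_map (monicP Pm) rmorph1.
rewrite {1}(@all_roots_prod_XsubC _ PK rs) ?lPK ?scale1r //.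
- by rewrite size_map size_iota.
- by apply/allP => z /mapP [i _ ->]; exact: PK_root.
rewrite uniq_rootsE map_inj_in_uniq ?iota_uniq // => i j.
rewrite !mem_iota !add0n => id jd E.
case: (ltngtP i j) => // [ij|ji].
  by move: (alpha_distinct (i:=i) (j:=j)); rewrite ij jd E eqxx => /(_ isT).
by move: (alpha_distinct (i:=j) (j:=i)); rewrite ji id E eqxx => /(_ isT).
Qed.

Lemma oddq i : odd (q ^ i)%N.
Proof. by rewrite oddX oddF orbT. Qed.

Lemma PK0 : cF P.[0] = (- alpha) ^+ (\sum_(i <- iota 0 d) q ^ i)%N.
Proof.
have : PK.[0] = cF P.[0] by rewrite /PK !horner_coef0 coef_map.
rewrite PK_fact horner_prod => <-.
rewrite -prodrXr big_map; apply: eq_bigr => i _.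
by rewrite !hornerE frN.
Qed.

Lemma geom (n : nat) : ((q - 1) * (\sum_(i <- iota 0 n) q ^ i) + 1 = q ^ n)%N.
Proof.
have q1 := q_gt1.
elim: n => [|n IH]; first by rewrite big_nil muln0.
have -> : (\sum_(i <- iota 0 n.+1) q ^ i = \sum_(i <- iota 0 n) q ^ i + q ^ n)%N.
  by rewrite -addn1 iotaD big_cat /= big_cons big_nil addn0 add0n.
rewrite expnS; move: IH; set S := (\sum_(i <- iota 0 n) q ^ i)%N; set Q := (q ^ n)%N.
move=> IH; nia.
Qed.

Lemma no_sqrt_negX (D : {poly F}) : (exists y : F, y ^+ 2 = P.[0]) \/ ~~ (P %| D ^+ 2 + 'X).
Proof.
case: (boolP (P %| D ^+ 2 + 'X)) => H; last by right.
left.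
set c := ip D.
have hc : c ^+ 2 = - alpha.
  move: H; rewrite -ip_eq0 rmorphD rmorphXn /= -/c -/alpha addr_eq0 => /eqP //.
have c0 : c != 0.
  by apply: contra_neq alpha0 => c0; apply/eqP; rewrite -oppr_eq0 -hc c0 expr0n.
apply: euler_sq => //.
set m := (#|F|.-1./2)%N.
apply: (fmorph_inj cF); rewrite rmorphXn rmorph1 PK0 -hc -!exprM.
have qm : (2 * m = q - 1)%N.
  rewrite /m /q mul2n halfK; move: oddF; case: #|F| => //= n; move/negbTE => ->.
  by rewrite subn0 subn1.
rewrite mulnCA qm.
have cq : c ^+ (q ^ d)%N = c by rewrite -cardK expf_card.
have := geom d; set S := (\sum_(i <- iota 0 d) q ^ i)%N => g.
apply: (mulfI c0); rewrite mulr1 -exprS -addn1 mulnC g.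
by rewrite cq.
Qed.

End KF.

Section Val.
Variable F : finFieldType.
Variable P : {poly F}.
Hypothesis Pm : P \is monic.
Hypothesis Pi : irreducible_poly P.
Hypothesis oddF : odd #|F|.
Hypothesis P0 : P.[0] != 0.
Hypothesis Pns : forall y : F, y ^+ 2 != P.[0].

Lemma P_neq0 : P != 0.
Proof. exact: monic_neq0 Pm. Qed.

Lemma Pprime A B : P %| A * B -> (P %| A) || (P %| B).
Proof.
case: (boolP (P %| A)) => //= nA.
by rewrite Gauss_dvdpr // irreducible_poly_coprime.
Qed.

Lemma aniso A B : P %| A ^+ 2 + 'X * B ^+ 2 -> (P %| A) && (P %| B).
Proof.
move=> H.
case: (boolP (P %| B)) => nB.
  rewrite andbT.
  have : P %| A * A.
    have hXB : P %| 'X * B ^+ 2 by rewrite dvdp_mull // expr2 dvdp_mulr.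
    by rewrite -expr2 -(dvdp_addl _ hXB).
  by move=> H2; case/orP: (Pprime H2) => ->.
exfalso.
have := irreducible_poly_coprime B Pi; rewrite nB => /Bezout_eq1_coprimepP [[u v] /= E].
have [[y Hy]|] := no_sqrt_negX Pm Pi oddF P0 (A * v).
  by move: (Pns y); rewrite Hy eqxx.
move/negP; apply.
have E2 : u * P = 1 - v * B by rewrite -E addrK.
have -> : (A * v) ^+ 2 + 'X = v ^+ 2 * (A ^+ 2 + 'X * B ^+ 2) + 'X * (u * P) * (1 + v * B).
  by rewrite E2; ring.
apply: dvdp_add; first by rewrite dvdp_mull.
by rewrite dvdp_mulr // dvdp_mull // dvdp_mulIr.
Qed.

Lemma val_even m A B : P ^+ (2 * m).+1 %| A ^+ 2 + 'X * B ^+ 2 ->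
  P ^+ (2 * m).+2 %| A ^+ 2 + 'X * B ^+ 2.
Proof.
elim: m A B => [|m IH] A B H.
  have := aniso (dvdp_trans (dvdp_exp2l P (isT : (1 <= (2 * 0).+1)%N)) H).
  case/andP => /divpK hA /divpK hB.
  rewrite -hA -hB.
  have -> : (A %/ P * P) ^+ 2 + 'X * (B %/ P * P) ^+ 2 = (P ^+ 2) * ((A %/ P) ^+ 2 + 'X * (B %/ P) ^+ 2) by ring.
  by rewrite dvdp_mulr.
have := aniso (dvdp_trans (dvdp_exp2l P (isT : (1 <= (2 * m.+1).+1)%N)) H).
case/andP => /divpK hA /divpK hB.
move: H; rewrite -hA -hB.
have -> : (A %/ P * P) ^+ 2 + 'X * (B %/ P * P) ^+ 2 = (P ^+ 2) * ((A %/ P) ^+ 2 + 'X * (B %/ P) ^+ 2) by ring.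
have e1 : (2 * m.+1).+1 = (2 + (2 * m).+1)%N by lia.
have e2 : (2 * m.+1).+2 = (2 + (2 * m).+2)%N by lia.
rewrite e1 -addnS !exprD dvdp_mul2l ?expf_neq0 ?P_neq0 //.
rewrite dvdp_mul2l ?expf_neq0 ?P_neq0 //; exact: IH.
Qed.

Lemma two_neq0 : (2 : F) != 0.
Proof.
apply/negP => /eqP H.
have p2 : (2%N \in [char F]) by rewrite inE /= H eqxx.
have := @pgroup.card_pgroup _ 2 (fingroup.setT_group _) (abelian.abelem_pgroup (abelian.fin_ring_pchar_abelem p2)).
rewrite cardsT => E.
have E2 : #|F| = (2 ^ logn 2 #|F|)%N by exact: E.
move: oddF; rewrite E2 oddX orbF => /eqP e.
have := finNzRing_gt1 F; by rewrite E2 e.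
Qed.

Lemma hensel n u : ~~ (P %| u) -> exists A B, P ^+ n.+1 %| u - (A ^+ 2 + 'X * B ^+ 2).
Proof.
move=> nu; elim: n => [|n [A [B H]]].
  have [A [B H]] := sum_sq_mod Pm Pi oddF P0 u; by exists A, B; rewrite expr1.
set N := A ^+ 2 + 'X * B ^+ 2 in H.
have hw := divpK H; set w := (u - N) %/ P ^+ n.+1 in hw.
have hu : u = N + w * P ^+ n.+1 by rewrite hw addrC subrK.
have nN : ~~ (P %| N).
  apply: contra nu => hN; rewrite hu dvdp_add // dvdp_mull //.
  by rewrite exprS dvdp_mulr.
set i2 := (2 : F)^-1.
have h2 : 2%:R * i2%:P = 1 :> {poly F}.
  by rewrite -polyC_natr -polyCM mulfV ?two_neq0.
case: (boolP (P %| A)) => hA.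
  have hB : ~~ (P %| B).
    by apply: contra nN => hB; rewrite dvdp_add // ?dvdp_mull // expr2 dvdp_mulr.
  have : coprimep P ('X * B) by rewrite coprimepMr !irreducible_poly_coprime // PnX.
  move=> /Bezout_eq1_coprimepP [[a b] /= E].
  set s := w * b * i2%:P.
  exists A, (B + P ^+ n.+1 * s).
  have -> : u - (A ^+ 2 + 'X * (B + P ^+ n.+1 * s) ^+ 2) =
     P ^+ n.+2 * (w * a - 'X * P ^+ n * s ^+ 2) + P ^+ n.+1 * w * (1 - (a * P + b * ('X * B))) + P ^+ n.+1 * w * b * 'X * B * (1 - 2%:R * i2%:P).
    by rewrite hu /N /s !exprS; move: (P ^+ n) => Q; ring.
  by rewrite E h2 !subrr !mulr0 !addr0 dvdp_mulr.
have : coprimep P A by rewrite irreducible_poly_coprime.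
move=> /Bezout_eq1_coprimepP [[a b] /= E].
set s := w * b * i2%:P.
exists (A + P ^+ n.+1 * s), B.
have -> : u - ((A + P ^+ n.+1 * s) ^+ 2 + 'X * B ^+ 2) =
   P ^+ n.+2 * (w * a - P ^+ n * s ^+ 2) + P ^+ n.+1 * w * (1 - (a * P + b * A)) + P ^+ n.+1 * w * b * A * (1 - 2%:R * i2%:P).
  by rewrite hu /N /s !exprS; move: (P ^+ n) => Q; ring.
by rewrite E h2 !subrr !mulr0 !addr0 dvdp_mulr.
Qed.

End Val.

Definition oddv (F : finFieldType) (P g : {poly F}) (n : nat) : bool :=
  [exists j : 'I_n, odd j && (P ^+ j %| g) && ~~ (P ^+ j.+1 %| g)].

Section Char.
Variable F : finFieldType.
Variable P : {poly F}.
Hypothesis Pm : P \is monic.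
Hypothesis Pi : irreducible_poly P.
Hypothesis oddF : odd #|F|.
Hypothesis P0 : P.[0] != 0.
Hypothesis Pns : forall y : F, y ^+ 2 != P.[0].

Lemma exval n g : ~~ (P ^+ n %| g) -> exists j, [&& (j < n)%N, P ^+ j %| g & ~~ (P ^+ j.+1 %| g)].
Proof.
elim: n => [|n IH] H; first by rewrite expr0 dvd1p in H.
case: (boolP (P ^+ n %| g)) => hn.
  by exists n; rewrite ltnSn hn H.
by have [j /and3P [jn a b]] := IH hn; exists j; rewrite ltnW ?a ?b.
Qed.

Lemma char_Aq n g : inAq (P ^+ n) g <-> ~~ oddv P g n.
Proof.
split.
  move=> [A [B H]]; apply/negP => /existsP [[j jn] /andP [/andP [oj dj] nj]] /=.
  move: oj dj nj; rewrite /= => oj dj nj.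
  set N := A ^+ 2 + 'X * B ^+ 2 in H.
  have hj : j = (2 * j./2).+1.
    by rewrite -{1}(odd_double_half j) oj mul2n add1n.
  have dN : P ^+ j %| N.
    have : P ^+ j %| g - N by apply: dvdp_trans H; apply: dvdp_exp2l; exact: ltnW.
    by rewrite (dvdp_subr _ dj).
  move: dN; rewrite hj => /(val_even Pm Pi oddF P0 Pns); rewrite -hj => dN.
  move/negP: nj; apply.
  have : P ^+ j.+1 %| g - N by apply: dvdp_trans H; apply: dvdp_exp2l.
  by rewrite -(dvdp_addl _ dN) subrK.
move=> nv.
case: (boolP (P ^+ n %| g)) => hg.
  by exists 0, 0; rewrite expr0n mulr0 addr0 subr0.
have [j /and3P [jn dj nj]] := exval hg.
have ej : ~~ odd j.
  apply: contra nv => oj; apply/existsP; exists (Ordinal jn) => /=.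
  by rewrite oj dj nj.
have hj : j = (2 * j./2)%N by rewrite -{1}(odd_double_half j) (negbTE ej) mul2n add0n.
have hu := divpK dj; set u := g %/ P ^+ j in hu.
have nu : ~~ (P %| u).
  apply: contra nj => pu; rewrite -hu exprSr.
  by rewrite mulrC dvdp_mul.
have [A [B H]] := hensel Pm Pi oddF P0 (n - j).-1 nu.
exists (P ^+ j./2 * A), (P ^+ j./2 * B).
have -> : g - ((P ^+ j./2 * A) ^+ 2 + 'X * (P ^+ j./2 * B) ^+ 2) =
   P ^+ j * (u - (A ^+ 2 + 'X * B ^+ 2)).
  rewrite -hu; move: hj; set m := j./2 => hj.
  rewrite hj mulnC exprM.
  by move: (P ^+ m) => Q; ring.
have -> : n = (j + (n - j).-1.+1)%N by lia.
by rewrite exprD dvdp_mul2l ?expf_neq0 ?(monic_neq0 Pm).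
Qed.

End Char.

Definition ptup (F : finFieldType) N (p : {poly F}) : N.-tuple F :=
  @Tuple N F (mkseq (fun i => p`_i) N) (introT eqP (size_mkseq _ _)).

Section Count.
Variable F : finFieldType.
Variable P : {poly F}.
Hypothesis Pm : P \is monic.
Let d := (size P).-1.
Let q := #|F|.

Lemma Poly_ptup N (p : {poly F}) : (size p <= N)%N -> Poly (@ptup F N p) = p.
Proof.
move=> sp; apply/polyP => i; rewrite coef_Poly /=.
case: (ltnP i N) => iN; first by rewrite nth_mkseq.
by rewrite nth_default ?size_mkseq // nth_default // (leq_trans sp iN).
Qed.

Lemma Poly_inj N (t1 t2 : N.-tuple F) : Poly t1 = Poly t2 -> t1 = t2.
Proof.
move=> E; apply: val_inj => /=.
apply: (@eq_from_nth F 0 (tval t1) (tval t2)); first by rewrite !size_tuple.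
move=> i _; have := congr1 (fun p : {poly F} => p`_i) E; by rewrite /= !coef_Poly.
Qed.

Lemma size_Poly_tup N (t : N.-tuple F) : (size (Poly t) <= N)%N.
Proof. by rewrite (leq_trans (size_Poly _)) // size_tuple. Qed.

Lemma size_Pexp j : size (P ^+ j) = (d * j).+1.
Proof.
have := size_exp P j; rewrite -/d => <-.
rewrite prednK // lt0n size_poly_eq0 expf_neq0 // monic_neq0 //.
Qed.

Lemma cnt_div n j g : (j <= n)%N ->
  #|[set t : (d * n).-tuple F | P ^+ j %| Poly t + g]| = (q ^ (d * (n - j)))%N.
Proof.
move=> jn.
have NM : (d * n = d * j + d * (n - j))%N by rewrite -mulnDr subnKC.
pose D := P ^+ j; pose r := (- g) %% D.
have Dm : D \is monic by rewrite monic_exp.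
have D0 : D != 0 by rewrite monic_neq0.
have sD : size D = (d * j).+1 by rewrite size_Pexp.
have sr : (size r <= d * j)%N by rewrite -ltnS -sD ltn_modp.
have szf (s : (d * (n - j)).-tuple F) : (size (r + D * Poly s)%R <= d * n)%N.
  rewrite (leq_trans (size_polyD _ _)) // geq_max; apply/andP; split.
    by rewrite (leq_trans sr) // NM leq_addr.
  by rewrite (leq_trans (size_mul_leq D _)) // sD addSn /= NM leq_add2l size_Poly_tup.
pose phi (s : (d * (n - j)).-tuple F) : (d * n).-tuple F := @ptup F (d * n) (r + D * Poly s).
have phiP s : Poly (phi s) = r + D * Poly s by rewrite Poly_ptup.
have phi_inj : injective phi.
  move=> s1 s2 E; apply: Poly_inj; apply: (mulfI D0); apply: (addrI r).
  by rewrite -!phiP E.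
have rg : D %| r + g.
  have e : r + g = - ((- g) %/ D * D).
    have e := divp_eq (- g) D.
    have e2 : g = - ((- g) %/ D * D + r) by rewrite -e opprK.
    by rewrite {1}e2 opprD addrCA subrr addr0.
  by rewrite e dvdpNr dvdp_mull.
have -> : [set t : (d * n).-tuple F | P ^+ j %| Poly t + g] = [set phi s | s in [set: (d * (n - j)).-tuple F]].
  apply/setP => t; rewrite inE; apply/idP/imsetP.
    move=> H.
    have H2 : D %| Poly t - r.
      have -> : Poly t - r = (Poly t + g) - (r + g) by rewrite opprD addrA addrAC addrK.
      by rewrite dvdp_sub.
    pose k := (Poly t - r) %/ D.
    have hk : Poly t - r = k * D by rewrite /k divpK.
    have sk : (size k <= d * (n - j))%N.
      case: (eqVneq k 0) => [->|k0]; first by rewrite size_poly0.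
      have : (size (k * D)%R <= d * n)%N.
        by rewrite -hk (leq_trans (size_polyD _ _)) // geq_max size_Poly_tup size_polyN (leq_trans sr) // NM leq_addr.
      by rewrite size_Mmonic // sD addnS /= NM addnC leq_add2l.
    exists (@ptup F _ k); first by rewrite inE.
    apply: Poly_inj; rewrite phiP Poly_ptup // mulrC -hk addrC subrK //.
  case=> s _ ->.
  by rewrite phiP addrAC (dvdp_addl _ (dvdp_mulIl D _)).
rewrite card_imset // cardsT card_tuple //.
Qed.

Lemma oddvS (x : {poly F}) m :
  oddv P x m.+1 = oddv P x m || [&& odd m, P ^+ m %| x & ~~ (P ^+ m.+1 %| x)].
Proof.
apply/existsP/orP => [[[j jm] /= H]|[/existsP [[j jm] /= H]|H]].
- case: (ltnP j m) => jm'.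
    by left; apply/existsP; exists (Ordinal jm').
  have ej : j = m by apply/eqP; rewrite eqn_leq jm'; rewrite ltnS in jm; rewrite jm.
  by right; move: H; rewrite ej -andbA.
- by exists (Ordinal (ltnW jm : (j < m.+1)%N)); rewrite /= H.
- by exists (Ordinal (ltnSn m)); rewrite /= -andbA.
Qed.

Let Q := (q ^ d)%N.

Lemma cnt_div' n j g : (j <= n)%N ->
  #|[set t : (d * n).-tuple F | P ^+ j %| Poly t + g]| = (Q ^ (n - j))%N.
Proof. by move=> jn; rewrite cnt_div // /Q -expnM. Qed.

Lemma cnt_exact n j g : (j < n)%N ->
  addn #|[set t : (d * n).-tuple F | (P ^+ j %| Poly t + g) && ~~ (P ^+ j.+1 %| Poly t + g)]|
   (expn Q (n - j.+1)) = expn Q (n - j).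
Proof.
move=> jn.
have hA := cnt_div' g (ltnW jn); have hB := cnt_div' g jn.
set A := [set t : (d * n).-tuple F | P ^+ j %| Poly t + g] in hA *.
set B := [set t : (d * n).-tuple F | P ^+ j.+1 %| Poly t + g] in hB *.
have h1 : A :&: B = B.
  apply/setP => t; rewrite !inE; apply/andP/idP => [[]//|b]; split=> //.
  by apply: dvdp_trans b; rewrite exprS dvdp_mulIr.
have h2 : A :\: B = [set t : (d * n).-tuple F | (P ^+ j %| Poly t + g) && ~~ (P ^+ j.+1 %| Poly t + g)].
  by apply/setP => t; rewrite !inE andbC.
have := cardsID B A; rewrite h1 h2 hA hB => <-.
by rewrite addnC.
Qed.

Definition Ev n m g := [set t : (d * n).-tuple F | oddv P (Poly t + g) m].

Lemma cnt_odd n g m : (m <= n)%N ->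
  ((Q + 1) * #|Ev n m g| + Q ^ (n - m + odd m) = Q ^ n)%N.
Proof.
elim: m => [|m IH] mn.
  have -> : Ev n 0 g = set0.
    apply/setP => t; rewrite !inE; apply/existsP => [[[j]]] //.
  by rewrite cards0 muln0 subn0 addn0.
have IH' := IH (ltnW mn).
have -> : Ev n m.+1 g = Ev n m g :|: [set t : (d * n).-tuple F | [&& odd m, P ^+ m %| Poly t + g & ~~ (P ^+ m.+1 %| Poly t + g)]].
  by apply/setP => t; rewrite !inE oddvS.
case: (boolP (odd m)) => om.
  have hx := cnt_exact g mn.
  have -> : [set t : (d * n).-tuple F | [&& true, P ^+ m %| Poly t + g & ~~ (P ^+ m.+1 %| Poly t + g)]] =
            [set t : (d * n).-tuple F | (P ^+ m %| Poly t + g) && ~~ (P ^+ m.+1 %| Poly t + g)].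
    by apply/setP => t; rewrite !inE.
  set E := [set t : (d * n).-tuple F | (P ^+ m %| Poly t + g) && ~~ (P ^+ m.+1 %| Poly t + g)] in hx *.
  have dis : [disjoint Ev n m g & E].
    apply/pred0P => t /=; rewrite !inE; apply/negP => /andP [/existsP [[j jm] /= /andP [/andP [_ a] b]] /andP [c e]].
    move/negP: b; apply; apply: dvdp_trans c; exact: dvdp_exp2l.
  rewrite cardsU (disjoint_setI0 dis) cards0 subn0.
  move: hx IH'; rewrite oddS om /=.
  have e1 : (n - m = (n - m.+1).+1)%N by lia.
  have e2 : (n - m + 1 = (n - m.+1).+2)%N by lia.
  have e3 : (n - m.+1 + 0 = n - m.+1)%N by lia.
  rewrite e2 e3 e1 !expnS.
  move: (Q ^ (n - m.+1))%N (#|_|) (#|Ev n m g|) (Q ^ n)%N => X a b c.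
  move=> H1 H2; nia.
have -> : [set t : (d * n).-tuple F | [&& false, P ^+ m %| Poly t + g & ~~ (P ^+ m.+1 %| Poly t + g)]] = set0.
  by apply/setP => t; rewrite !inE.
rewrite setU0.
move: IH'; rewrite oddS (negbTE om) /=.
have e1 : (n - m + 0 = (n - m.+1) + 1)%N by lia.
by rewrite e1.
Qed.
End Count.

Section Bad.
Variable F : finFieldType.
Variable P : {poly F}.
Hypothesis Pm : P \is monic.
Let d := (size P).-1.
Let q := #|F|.
Let Q := (q ^ d)%N.

Definition Bad n (s : seq {poly F}) :=
  [set t : (d * n).-tuple F | has (fun hi => oddv P (Poly t + hi) n) s].

Definition cn n := #|Ev P n n 0|.

Lemma Ev_card n g : #|Ev P n n g| = cn n.
Proof.
have h1 := cnt_odd Pm g (leqnn n); have h2 := cnt_odd Pm 0 (leqnn n).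
rewrite -/d -/q -/Q in h1 h2.
rewrite /cn; apply/eqP; rewrite -(eqn_pmul2l (ltn_addl Q (ltn0Sn 0) : (0 < Q + 1)%N)).
by apply/eqP; apply: (@addIn (Q ^ (n - n + odd n))%N); rewrite h1 h2.
Qed.

Lemma oddv_dvd (x : {poly F}) n : oddv P x n -> P %| x.
Proof.
case/existsP => [[j jn] /= /andP [/andP [oj dj] _]].
apply: dvdp_trans dj; rewrite -{1}(expr1 P); apply: dvdp_exp2l.
by case: j oj {jn}.
Qed.

Lemma bad_le n s : (#|Bad n s| <= size s * cn n)%N.
Proof.
elim: s => [|a s IH].
  by rewrite (_ : Bad n [::] = set0) ?cards0 //; apply/setP => t; rewrite !inE.
have -> : Bad n (a :: s) = Ev P n n a :|: Bad n s.
  by apply/setP => t; rewrite !inE.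
rewrite cardsU (leq_trans (leq_subr _ _)) // Ev_card /= mulSn leq_add2l //.
Qed.

Lemma bad_ge n s a : a \in s -> (cn n <= #|Bad n s|)%N.
Proof.
move=> ain; rewrite -(Ev_card n a); apply: subset_leq_card.
apply/subsetP => t; rewrite !inE => H; apply/hasP; by exists a.
Qed.

Lemma bad_eq n s : uniq s -> (forall a b, a \in s -> b \in s -> a != b -> ~~ (P %| a - b)) ->
  #|Bad n s| = (size s * cn n)%N.
Proof.
elim: s => [|a s IH] /=.
  by rewrite (_ : Bad n [::] = set0) ?cards0 //; apply/setP => t; rewrite !inE.
move=> /andP [an us] H.
have -> : Bad n (a :: s) = Ev P n n a :|: Bad n s.
  by apply/setP => t; rewrite !inE.
have dis : [disjoint Ev P n n a & Bad n s].
  apply/pred0P => t /=; rewrite !inE; apply/negP => /andP [ea /hasP [b bs eb]].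
  have hab : a != b by apply: contraNneq an => ->.
  have bin : b \in a :: s by rewrite inE bs orbT.
  move: (H a b (mem_head a s) bin hab) => /negP; apply.
  have := dvdp_sub (oddv_dvd ea) (oddv_dvd eb).
  by rewrite opprD addrACA subrr add0r.
rewrite cardsU (disjoint_setI0 dis) cards0 subn0 Ev_card IH ?mulSn //.
by move=> x y xs ys; apply: H; rewrite inE ?xs ?ys orbT.
Qed.

Lemma oddv_lift (x y : {poly F}) n : oddv P x n -> oddv P (x + P ^+ n * y) n.+1.
Proof.
case/existsP => [[j jn] /= /andP [/andP [oj dj] nj]].
apply/existsP; exists (Ordinal (ltnW jn : (j < n.+1)%N)) => /=.
have h1 : P ^+ j %| P ^+ n * y by rewrite dvdp_mulr // dvdp_exp2l // ltnW.
have h2 : P ^+ j.+1 %| P ^+ n * y by rewrite dvdp_mulr // dvdp_exp2l.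
by rewrite oj (dvdp_addl _ h1) dj (dvdp_addl _ h2) nj.
Qed.

Lemma bad_mono n s : (Q * #|Bad n s| <= #|Bad n.+1 s|)%N.
Proof.
pose psi (ts : (d * n).-tuple F * d.-tuple F) : (d * n.+1).-tuple F :=
  ptup (d * n.+1) (Poly ts.1 + P ^+ n * Poly ts.2).
have sz (ts : (d * n).-tuple F * d.-tuple F) :
    (size (Poly ts.1 + P ^+ n * Poly ts.2)%R <= d * n.+1)%N.
  rewrite (leq_trans (size_polyD _ _)) // geq_max; apply/andP; split.
    by rewrite (leq_trans (size_Poly_tup _)) // leq_mul2l ltnW ?orbT.
  rewrite (leq_trans (size_mul_leq _ _)) // size_Pexp // -/d addSn /= mulnS addnC.
  by rewrite leq_add2r size_Poly_tup.
have psiP ts : Poly (psi ts) = Poly ts.1 + P ^+ n * Poly ts.2 by rewrite Poly_ptup.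
have psi_inj : injective psi.
  move=> [t1 s1] [t2 s2] /= E.
  have E2 : Poly t1 - Poly t2 = P ^+ n * (Poly s2 - Poly s1).
    move: (congr1 (fun u : (d * n.+1).-tuple F => Poly u) E); rewrite !psiP /= => E'.
    have e1 : Poly t1 = Poly t2 + P ^+ n * Poly s2 - P ^+ n * Poly s1 by rewrite -E' addrK.
    by rewrite e1; move: (P ^+ n) (Poly t2) (Poly s1) (Poly s2) => a b c e; ring.
  case: (eqVneq (Poly s2 - Poly s1) 0) => [e|ne].
    have e' : Poly s2 = Poly s1 by apply/eqP; rewrite -subr_eq0 e.
    move: E2; rewrite e mulr0 => /eqP; rewrite subr_eq0 => /eqP e2.
    by rewrite (Poly_inj e2) (Poly_inj e').
  exfalso.
  have : (size (Poly t1 - Poly t2)%R <= d * n)%N.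
    by rewrite (leq_trans (size_polyD _ _)) // geq_max size_polyN !size_Poly_tup.
  rewrite E2 mulrC size_Mmonic ?monic_exp // size_Pexp // -/d addnS /=.
  move=> H; have hs : (0 < size (Poly s2 - Poly s1)%R)%N by rewrite lt0n size_poly_eq0.
  move: (size (Poly s2 - Poly s1)%R) (d * n)%N H hs => k m H hs; lia.
have : psi @: setX (Bad n s) setT \subset Bad n.+1 s.
  apply/subsetP => t /imsetP [[t1 s1]] /setXP [b _] ->.
  rewrite !inE in b *; case/hasP: b => hi hin ho; apply/hasP; exists hi => //.
  by rewrite psiP /= addrAC; apply: oddv_lift.
move/subset_leq_card; rewrite card_imset // cardsX cardsT card_tuple mulnC.
by [].
Qed.

Lemma asbool_true (X : Prop) : asbool X = true <-> X.
Proof. by rewrite /asbool; case: excluded_middle_informative. Qed.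

End Bad.

Section Fin.
Variable F : finFieldType.
Variable P : {poly F}.
Hypothesis Pm : P \is monic.
Hypothesis Pi : irreducible_poly P.
Hypothesis oddF : odd #|F|.
Hypothesis P0 : P.[0] != 0.
Hypothesis Pns : forall y : F, y ^+ 2 != P.[0].

Lemma count_eq n h : (countAqh h P n + #|Bad P n h|)%N = expn (normP P) n.
Proof.
rewrite /countAqh.
have -> : [set t : (((size P).-1 * n)%N).-tuple F | asbool (inAqh h (P ^+ n) (Poly t))] = ~: Bad P n h.
  apply/setP => t; rewrite !inE.
  apply/idP/idP => [/asbool_true H|H].
    apply/hasPn => hi hin; exact: (char_Aq Pm Pi oddF P0 Pns _ _).1 (H hi hin).
  apply/asbool_true => hi hin; apply: (char_Aq Pm Pi oddF P0 Pns _ _).2.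
  exact: (hasPn H) hi hin.
rewrite addnC cardsC card_tuple /normP expnM //.
Qed.

Lemma Delta_pair (h : seq {poly F}) : uniq h -> ~~ (P %| Deltah h) ->
  forall a b, a \in h -> b \in h -> a != b -> ~~ (P %| a - b).
Proof.
move=> uh nD a b ain bin ab; apply: contra nD => H.
have ia := index_mem a h; have ib := index_mem b h.
rewrite ain in ia; rewrite bin in ib.
have ea := nth_index 0 ain; have eb := nth_index 0 bin.
have ij : Ordinal ia != Ordinal ib.
  apply: contra ab => /eqP [E]; by rewrite -ea -eb E.
rewrite /Deltah (bigD1 (Ordinal ia)) //= (bigD1 (Ordinal ib)) //=.
by rewrite ea eb dvdp_mulr // dvdp_mulr.
Qed.

End Fin.

From Stdlib Require Import Reals Lra.

Section RealPart.
Local Open Scope R_scope.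


Lemma INR_expn (Q n : nat) : INR (expn Q n) = INR Q ^ n.
Proof.
elim: n => [|n IH]; first by rewrite expn0.
by rewrite expnS mulnE mult_INR IH /=.
Qed.

Lemma div_nonneg a b : 0 <= a -> 0 < b -> 0 <= a / b.
Proof. move=> ha hb; apply: Rmult_le_pos => //; apply/Rlt_le/Rinv_0_lt_compat/hb. Qed.

Lemma real_limit (Q k : nat) (b c : nat -> nat) :
  (1 < Q)%nat -> (0 < k)%nat ->
  (forall n, addn (muln (addn Q 1) (c n)) (expn Q (odd n)) = expn Q n) ->
  (forall n, (c n <= b n)%nat /\ (b n <= muln k (c n))%nat) ->
  (forall n, (muln Q (b n) <= b n.+1)%nat) ->
  exists L : R, Un_cv (fun n => INR (b n) / INR (expn Q n)) L /\
    1 / (INR Q + 1) <= L /\ L <= INR k / (INR Q + 1) /\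
    ((forall n, b n = muln k (c n)) -> L = INR k / (INR Q + 1)).
Proof.
move=> Q1 k0 H1 H2 H3.
have Qr : 1 < INR Q by apply: lt_1_INR; apply/ltP.
have Qn n : 0 < INR (expn Q n) by rewrite INR_expn; apply: pow_lt; lra.
pose u n := INR (b n) / INR (expn Q n).
pose e n := INR (c n) / INR (expn Q n).
have He n : e n = (1 - INR (expn Q (odd n)) / INR (expn Q n)) / (INR Q + 1).
  have := H1 n => /(f_equal INR); rewrite !addnE !mulnE !plus_INR mult_INR plus_INR /= => E.
  have cE : INR (c n) = (INR (expn Q n) - INR (expn Q (odd n))) / (INR Q + 1).
    by rewrite -E; field; lra.
  have := Qn n => q0.
  by rewrite /e cE; field; repeat split; lra.
have rpos n : 0 <= INR (expn Q (odd n)) / INR (expn Q n).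
  by apply: div_nonneg; [apply: pos_INR | apply: Qn].
have ecv : Un_cv e (1 / (INR Q + 1)).
  move=> eps eps0.
  set x := / INR Q.
  have xQ : x * INR Q = 1 by rewrite /x Rinv_l //; lra.
  have x0 : 0 < x by apply: Rinv_0_lt_compat; lra.
  have x1 : x < 1 by nra.
  have [N HN] := @pow_lt_1_zero x ltac:(rewrite Rabs_pos_eq; lra) (eps * x) ltac:(nra).
  exists N => n nN; rewrite /Rdist He.
  have hn := HN n nN; rewrite Rabs_pos_eq in hn; last by apply: pow_le; lra.
  have hinv : / INR (expn Q n) = x ^ n by rewrite INR_expn -pow_inv.
  have p1 : INR (expn Q (odd n)) <= INR Q.
    by case: (odd n); rewrite ?expn1 ?expn0 /=; lra.
  set r := INR (expn Q (odd n)) / INR (expn Q n).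
  have hr : r = INR (expn Q (odd n)) * x ^ n by rewrite /r /Rdiv hinv.
  have r0 : 0 <= r by apply: rpos.
  have xn0 : 0 <= x ^ n by apply: pow_le; lra.
  have rlt : r < eps.
    rewrite hr; have : INR Q * x ^ n < eps by nra.
    nra.
  have E : (1 - r) / (INR Q + 1) - 1 / (INR Q + 1) = - (r / (INR Q + 1)) by field; lra.
  rewrite E Rabs_Ropp Rabs_pos_eq; last by apply: div_nonneg; lra.
  set y := / (INR Q + 1).
  have yQ : y * (INR Q + 1) = 1 by rewrite /y Rinv_l //; lra.
  have y0 : 0 < y by apply: Rinv_0_lt_compat; lra.
  rewrite /Rdiv -/y; nra.
have ule n : e n <= u n <= INR k * e n.
  have [a b'] := H2 n.
  have a' : INR (c n) <= INR (b n) by apply: le_INR; apply/leP.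
  have b'' : INR (b n) <= INR k * INR (c n) by rewrite -mult_INR -mulnE; apply: le_INR; apply/leP.
  have iq : 0 <= / INR (expn Q n) by apply/Rlt_le/Rinv_0_lt_compat.
  rewrite /u /e /Rdiv; split; nra.
have ug : Un_growing u.
  move=> n; rewrite /u.
  have h' : INR Q * INR (b n) <= INR (b n.+1).
    by rewrite -mult_INR -mulnE; apply: le_INR; apply/leP.
  rewrite expnS mulnE mult_INR.
  have q0 := Qn n.
  have -> : INR (b n.+1) / (INR Q * INR (expn Q n)) =
     INR (b n) / INR (expn Q n) + (INR (b n.+1) - INR Q * INR (b n)) / (INR Q * INR (expn Q n)).
    by field; lra.
  have : 0 <= (INR (b n.+1) - INR Q * INR (b n)) / (INR Q * INR (expn Q n)).
    by apply: div_nonneg; nra.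
  lra.
have uub : has_ub u.
  exists (INR k) => x [n ->].
  have e1 : e n <= 1.
    rewrite He; set r := INR (expn Q (odd n)) / INR (expn Q n).
    have r0 : 0 <= r by apply: rpos.
    set y := / (INR Q + 1).
    have yQ : y * (INR Q + 1) = 1 by rewrite /y Rinv_l //; lra.
    have y0 : 0 < y by apply: Rinv_0_lt_compat; lra.
    rewrite /Rdiv -/y; nra.
  have := ule n; have : 0 <= INR k by apply: pos_INR.
  nra.
have [L HL] := growing_cv u ug uub.
have kcv : Un_cv (fun n => INR k * e n) (INR k * (1 / (INR Q + 1))).
  apply: CV_mult => //; move=> eps eps0; exists 0%nat => n _; rewrite /Rdist Rminus_diag Rabs_R0 //.
exists L; split => //; split; last split.
- by apply: (Rle_cv_lim (Un := e) (Vn := u)) => // n; case: (ule n).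
- have -> : INR k / (INR Q + 1) = INR k * (1 / (INR Q + 1)) by field; lra.
  by apply: (Rle_cv_lim (Un := u) (Vn := fun n => INR k * e n)) => // n; case: (ule n).
- move=> Heq.
  have -> : INR k / (INR Q + 1) = INR k * (1 / (INR Q + 1)) by field; lra.
  apply: (UL_sequence _ _ _ HL); apply: (Un_cv_ext (fun n => INR k * e n)) => // n.
  by rewrite /u /e Heq mulnE mult_INR /Rdiv Rmult_assoc.
Qed.

End RealPart.

Local Open Scope ring_scope.

Theorem mainTheorem10 (F : finFieldType) (P : {poly F}) (h : seq {poly F}) :
  odd #|F| ->
  P \is monic -> irreducible_poly P ->
  chiq P = -1 ->
  uniq h -> (0 < size h)%nat ->
  exists eta : R,
    (1 <= eta)%R /\ (eta <= INR (size h))%R /\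
    Un_cv (fun nu : nat => (INR (countAqh h P nu) / INR (normP P ^ nu)%nat)%R)
          (1 - eta / (INR (normP P) + 1))%R /\
    (h = [:: 0] -> eta = 1%R) /\
    (~~ (P %| Deltah h) -> eta = INR (size h)).
Proof.
move=> oddF Pm Pi chi uh h0.
have [P0 Pns] : P.[0] != 0 /\ (forall y : F, y ^+ 2 != P.[0]).
  move: chi; rewrite /chiq; case: ifP => [_ //|/negbT P0'].
  case: ifP => [_ //|/negbT ne _]; split => // y.
  by apply: contra ne => E; apply/existsP; exists y.
pose Q := normP P.
have Q1 : (1 < Q)%nat.
  rewrite /Q /normP; have s1 : (1 < size P)%nat by case: Pi.
  rewrite -{1}(expn0 #|F|) ltn_exp2l ?finNzRing_gt1 //; by case: (size P) s1 => [|[|]].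
pose b n := #|Bad P n h|.
pose c n := cn P n.
have H1 n : addn (muln (addn Q 1) (c n)) (expn Q (odd n)) = expn Q n.
  by have := cnt_odd Pm 0 (leqnn n); rewrite subnn add0n.
have H2 n : (c n <= b n)%nat /\ (b n <= muln (size h) (c n))%nat.
  split; last exact: bad_le.
  have [a ain] : exists a, a \in h by move: h0 {uh b H1 c}; case: h => // a s _; exists a; exact: mem_head.
  exact: bad_ge ain.
have H3 n : (muln Q (b n) <= b n.+1)%nat by exact: bad_mono.
have [L [HL [L1 [L2 L3]]]] := @real_limit Q (size h) b c Q1 h0 H1 H2 H3.
have Qr : (1 < INR Q)%R by apply: lt_1_INR; apply/ltP.
have Qn n : (0 < INR (expn Q n))%R by rewrite INR_expn; apply: pow_lt; lra.
exists (L * (INR Q + 1))%R.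
split.
  have : (1 / (INR Q + 1) * (INR Q + 1) <= L * (INR Q + 1))%R.
    by apply: Rmult_le_compat_r => //; lra.
  have -> : (1 / (INR Q + 1) * (INR Q + 1) = 1)%R by field; lra.
  done.
split.
  have : (L * (INR Q + 1) <= INR (size h) / (INR Q + 1) * (INR Q + 1))%R.
    by apply: Rmult_le_compat_r => //; lra.
  have -> : (INR (size h) / (INR Q + 1) * (INR Q + 1) = INR (size h))%R by field; lra.
  done.
split.
  have -> : (1 - L * (INR Q + 1) / (INR (normP P) + 1) = 1 - L)%R by rewrite -/Q; field; lra.
  apply: (Un_cv_ext (fun n => 1 - INR (b n) / INR (expn Q n))%R).
    move=> n; have := count_eq Pm Pi oddF P0 Pns n h; rewrite -/Q -/(b n) => E.
    have E' : INR (countAqh h P n) = (INR (expn Q n) - INR (b n))%R.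
      by rewrite -E plus_INR; ring.
    rewrite E' pow_INR -INR_expn; have := Qn n; move=> q0; field; lra.
  apply: CV_minus => //; move=> eps eps0; exists 0%nat => n _; rewrite /Rdist Rminus_diag Rabs_R0 //.
have disj : (forall n, b n = muln (size h) (c n)) -> (L * (INR Q + 1) = INR (size h))%R.
  move=> Hb; rewrite (L3 Hb); field; lra.
split.
  move=> eh; rewrite disj ?eh //.
  move=> n; rewrite /b /c eh; apply: bad_eq => //.
  by move=> x y; rewrite !inE => /eqP -> /eqP ->; rewrite eqxx.
move=> nD; apply: disj => n; apply: bad_eq => //.
exact: Delta_pair.
Qed.
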